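(* Let $d_0<d_1<d_2<\cdots$ be the increasing enumeration of $\mathcal{D}=\{m\ge1:\ c_m=0\}$ (so $d_0=3$), and for $n\ge0$ let $z_n=\left(\frac{d_{4n}+1}{4}-n\right)\bmod 2\in\{0,1\}$ (here $\frac{d_{4n}+1}{4}$ is an integer). Then $z_n=1$ if and only if $n$ can be written as $n=\sum_{i=0}^{s}2^{n_i-1}(2^{n_i}-1)$ for some (possibly empty, giving $n=0$) strictly increasing sequence of integers $1<n_0<n_1<\cdots<n_s$.
   Context: For $n\in\mathbb{N}$ let $s_2(n)$ be the sum of the binary digits of $n$ and $t_n=s_2(n)\bmod 2$ (the Prouhet–Thue–Morse sequence). Let $F(X)=\sum_{n\ge1}t_nX^n\in\mathbb{F}_2[[X]]$ and let $G(X)=\sum_{n\ge1}c_nX^n\in\mathbb{F}_2[[X]]$ be its compositional inverse, i.e. $F(G(X))=G(F(X))=X$. The $c_n$ are identified with integers in $\{0,1\}$. *)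

(* Defs.v *)
From HB Require Import structures.
From mathcomp Require Import all_boot all_order all_algebra.
Set Implicit Arguments. Unset Strict Implicit. Unset Printing Implicit Defensive.
Import GRing.Theory.
Local Open Scope ring_scope.

(* s_2(n): sum of binary digits of n (fuel n suffices since n./2 < n for n > 0). *)
Fixpoint s2_aux (fuel n : nat) : nat :=
  match fuel with
  | 0 => 0
  | f.+1 => (odd n + s2_aux f n./2)%N
  end.
Definition s2 (n : nat) : nat := s2_aux n n.

Definition tm (n : nat) : nat := (s2 n %% 2)%N.

(* Truncation to degree N of F(X) = sum_{n>=1} t_n X^n in F_2[[X]] *)
Definition Ftrunc (N : nat) : {poly 'F_2} :=
  \poly_(i < N.+1) (if i == 0%N then 0 else (tm i)%:R).

(* Truncation to degree N of G(X) = sum_{n>=1} c_n X^n (c_n in {0,1} as bool) *)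
Definition Gtrunc (c : nat -> bool) (N : nat) : {poly 'F_2} :=
  \poly_(i < N.+1) (if i == 0%N then 0 else (c i)%:R).

(* Since F and G have zero constant term, the coefficients of degree <= N of
   the compositions only depend on the truncations to degree N. *)
Definition is_comp_inverse (c : nat -> bool) : Prop :=
  forall N k : nat, (k <= N)%N ->
    ((Ftrunc N \Po Gtrunc c N)`_k = (k == 1%N)%:R) /\
    ((Gtrunc c N \Po Ftrunc N)`_k = (k == 1%N)%:R).

Definition zseq (d : nat -> nat) (n : nat) : int :=
  (((((d (4 * n)%N).+1 %/ 4)%N)%:Z - n%:Z) %% 2)%Z.

Definition representable (n : nat) : Prop :=
  exists s : seq nat, sorted ltn s /\ all (fun x => 1 < x)%N s /\
    n = (\sum_(x <- s) 2 ^ (x.-1) * (2 ^ x - 1))%N.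

(* Main.v *)
Require Import Defs.
From HB Require Import structures.
From mathcomp Require Import all_boot all_order all_algebra.
From mathcomp Require Import zify ring lra.
Set Implicit Arguments. Unset Strict Implicit. Unset Printing Implicit Defensive.
Import GRing.Theory.
Local Open Scope ring_scope.
Notation P2 := {poly 'F_2}.
Definition eqm (n : nat) (p q : P2) := forall k, (k < n)%N -> p`_k = q`_k.

Lemma eqm_refl n (p : P2) : eqm n p p. Proof. by []. Qed.
Lemma eqm_sym n (p q : P2) : eqm n p q -> eqm n q p.
Proof. by move=> H k kn; rewrite H. Qed.
Lemma eqm_trans n (p q r : P2) : eqm n p q -> eqm n q r -> eqm n p r.
Proof. by move=> H1 H2 k kn; rewrite H1 ?H2. Qed.
Lemma eqm_add n (p q p' q' : P2) : eqm n p p' -> eqm n q q' -> eqm n (p + q) (p' + q').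
Proof. by move=> H1 H2 k kn; rewrite !coefD H1 ?H2. Qed.
Lemma eqm_opp n (p p' : P2) : eqm n p p' -> eqm n (- p) (- p').
Proof. by move=> H1 k kn; rewrite !coefN H1. Qed.
Lemma eqm_mul n (p q p' q' : P2) : eqm n p p' -> eqm n q q' -> eqm n (p * q) (p' * q').
Proof.
move=> H1 H2 k kn; rewrite !coefM; apply: eq_bigr => j _.
have jk := ltn_ord j.
by rewrite H1 ?H2 //; lia.
Qed.
Lemma eqm_exp n (p p' : P2) m : eqm n p p' -> eqm n (p ^+ m) (p' ^+ m).
Proof.
move=> H; elim: m => [|m IH]; first exact: eqm_refl.
by rewrite !exprS; apply: eqm_mul.
Qed.
Lemma eqm_le n m (p q : P2) : (m <= n)%N -> eqm n p q -> eqm m p q.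
Proof. by move=> mn H k km; apply: H; lia. Qed.

Lemma eqmP n (p q : P2) : eqm n p q <-> exists r, p - q = r * 'X^n.
Proof.
split=> [H|[r Hr] k kn].
  exists (drop_poly n (p - q)).
  rewrite -{1}(poly_take_drop n (p - q)).
  have -> : take_poly n (p - q) = 0.
    apply/polyP=> i; rewrite coef_take_poly coef0 coefB.
    by case: ifP => // /H ->; rewrite subrr.
  by rewrite add0r.
apply/eqP; rewrite -subr_eq0 -coefB Hr coefMXn kn //.
Qed.

Lemma eqm_comp_l n (p p' q : P2) : eqm n p p' -> q`_0 = 0 -> eqm n (p \Po q) (p' \Po q).
Proof.
move=> /eqmP [r Hr] q0; apply/eqmP.
have Hq : q = drop_poly 1 q * 'X.
  rewrite -{1}(poly_take_drop 1 q).
  have -> : take_poly 1 q = 0.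
    apply/polyP=> i; rewrite coef_take_poly coef0.
    by case: i => [|i] //=; rewrite q0.
  by rewrite add0r expr1.
exists ((r \Po q) * (drop_poly 1 q) ^+ n).
rewrite -comp_polyB Hr comp_polyM comp_Xn_poly {2}Hq exprMn.
by rewrite mulrA.
Qed.

Lemma eqm_comp_r n (p q q' : P2) : eqm n q q' -> eqm n (p \Po q) (p \Po q').
Proof.
move=> H; elim/poly_ind: p => [|p c IH]; first by rewrite !comp_poly0.
rewrite !comp_poly_MXaddC; apply: eqm_add; last exact: eqm_refl.
exact: eqm_mul.
Qed.

Lemma eqm_cancel n (D U : P2) : eqm n (D * U) 0 -> U`_0 = 1 -> eqm n D 0.
Proof.
move=> H U0.
suff: forall k, (k < n)%N -> forall j, (j <= k)%N -> D`_j = 0.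
  by move=> S k kn; rewrite coef0 (S k kn k).
elim=> [|k IH] kn j jk.
  have := H 0%N kn; rewrite coefM big_ord1 coef0 U0 mulr1.
  by have -> : j = 0%N by lia.
case: (ltngtP j k.+1) => [jk'|jk'|->]; first by apply: IH; lia.
  by exfalso; lia.
have := H k.+1 kn; rewrite coefM big_ord_recr /= subnn U0 mulr1 coef0.
rewrite big1 ?add0r //.
move=> i _.
by rewrite (IH (ltn_trans _ kn)) ?mul0r //; have := ltn_ord i; lia.
Qed.

Lemma eqm_Xn n m (p : P2) : eqm (n + m) ('X^m * p) 0 -> eqm n p 0.
Proof.
move=> H k kn; rewrite coef0; have := H (k + m)%N; rewrite coefXnM coef0.
have -> : (k + m < m)%N = false by lia.
rewrite addnK; apply; lia.
Qed.

Lemma F2_two : (2%:R : 'F_2) = 0. Proof. by apply/val_inj. Qed.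
Lemma P2_two : (2%:R : P2) = 0. Proof. by rewrite -polyC_natr F2_two. Qed.
Lemma P2_addrr (x : P2) : x + x = 0.
Proof. by rewrite -mulr2n -mulr_natr P2_two mulr0. Qed.
Lemma F2_mulrr (x : 'F_2) : x * x = x.
Proof. by case: x => [[|[|m]] Hm]; apply/val_inj => //=. Qed.

Lemma P2_sq (p : P2) : p ^+ 2 = p \Po 'X^2.
Proof.
elim/poly_ind: p => [|p c IH]; first by rewrite comp_poly0 expr0n.
rewrite comp_poly_MXaddC -IH.
have E : (p * 'X + c%:P) ^+ 2 = p ^+ 2 * 'X ^+ 2 + (c * c)%:P + 2%:R * (p * 'X * c%:P).
  by rewrite polyCM; ring.
by rewrite E P2_two mul0r addr0 F2_mulrr.
Qed.

Lemma P2_sq4 (p : P2) : p ^+ 4 = p \Po 'X^4.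
Proof.
have -> : (4 = 2 * 2)%N by [].
by rewrite exprM (P2_sq (p ^+ 2)) (P2_sq p) -comp_polyA comp_Xn_poly -exprM.
Qed.

Lemma cXq_at m r i k (a : P2) : (0 < m)%N -> k = (m * i + r)%N ->
  ('X^r * (a \Po 'X^m))`_k = a`_i.
Proof.
move=> m0 ->; rewrite coefXnM.
have -> : (m * i + r < r)%N = false by lia.
rewrite addnK coef_comp_poly_Xn // dvdn_mulr // mulKn //.
Qed.

Lemma cXq_miss m r k (a : P2) : (0 < m)%N -> ((r <= k)%N -> ~~ (m %| k - r)%N) ->
  ('X^r * (a \Po 'X^m))`_k = 0.
Proof.
move=> m0 H; rewrite coefXnM; case: ltnP => // rk.
by rewrite coef_comp_poly_Xn // (negbTE (H rk)).
Qed.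

Lemma s2_aux_fuel f g n : (n <= f)%N -> (n <= g)%N -> s2_aux f n = s2_aux g n.
Proof.
elim: f g n => [|f IH] [|g] n /= nf ng.
- by [].
- have -> : n = 0%N by lia.
  by elim: g {ng nf} => //= g ->.
- have -> : n = 0%N by lia.
  by elim: f {IH ng nf} => //= f ->.
- have Hh : forall m, (m.+1./2 <= m)%N.
    by move=> m; rewrite leq_half_double -addnn; lia.
  rewrite (IH g) //; case: n nf ng => [|n] //= H1 H2;
  by move: (Hh n); rewrite /=; lia.
Qed.

Lemma s2_rec n : s2 n = (odd n + s2 n./2)%N.
Proof.
case: n => [|n] //.
rewrite /s2 /=; congr (_ + _)%N; apply: s2_aux_fuel => //.
have : ((n.+1)./2 <= n)%N by rewrite leq_half_double -addnn; lia.
rewrite /=; lia.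
Qed.

Lemma s2_even m : s2 m.*2 = s2 m.
Proof. by rewrite s2_rec odd_double doubleK. Qed.
Lemma s2_odd m : s2 m.*2.+1 = (s2 m).+1.
Proof. by rewrite s2_rec /= odd_double /= uphalf_double. Qed.

Definition fF (k : nat) : 'F_2 := (s2 k)%:R.

Lemma coefF N k : (k <= N)%N -> (Ftrunc N)`_k = fF k.
Proof.
move=> kN; rewrite /Ftrunc coef_poly ltnS kN /fF /tm Fp_nat_mod //.
by case: k {kN}.
Qed.

Lemma fF_even m : fF m.*2 = fF m. Proof. by rewrite /fF s2_even. Qed.
Lemma fF_odd m : fF m.*2.+1 = 1 + fF m.
Proof. by rewrite /fF s2_odd -[(s2 m).+1]add1n natrD. Qed.
Lemma fF0 : fF 0 = 0. Proof. by []. Qed.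
Lemma F2_addrr (x : 'F_2) : x + x = 0.
Proof. by rewrite -mulr2n -mulr_natr F2_two mulr0. Qed.

Ltac f2case x := case: x => [[|[|?]] ?] //.

Lemma F_eq N : eqm N.+1 ('X + (1 + 'X) ^+ 2 * Ftrunc N + (1 + 'X) ^+ 3 * Ftrunc N ^+ 2) 0.
Proof.
set F := Ftrunc N; set q := F \Po 'X^2.
have E : 'X + (1 + 'X) ^+ 2 * F + (1 + 'X) ^+ 3 * F ^+ 2 =
   'X + F + 'X^2 * F + ('X^0 * q + 'X^1 * q + 'X^2 * q + 'X^3 * q)
   + 2%:R * ('X * F + ('X + 'X^2) * q).
  by rewrite /q -P2_sq; ring.
have cF : forall i, (i <= N)%N -> F`_i = fF i by move=> i iN; apply: coefF.
rewrite E P2_two mul0r addr0 => k kN.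
rewrite coef0 !coefD coefX coefXnM.
have [j [Hk | Hk]] : exists j, k = j.*2 \/ k = j.*2.+1.
  exists k./2; have := odd_double_half k; case: (odd k) => /= H; [right|left]; lia.
all: subst k.
- case: j kN => [|i] kN.
  + rewrite (cXq_at (r := 0) (i := 0)) //.
    rewrite (cXq_miss (k := 0) (r := 1)) // (cXq_miss (k := 0) (r := 2)) //.
    rewrite (cXq_miss (k := 0) (r := 3)) // !cF //.
    by rewrite fF0; apply/val_inj.
  rewrite (cXq_at (r := 0) (i := i.+1)) //; last lia.
  rewrite (cXq_miss (k := i.+1.*2) (r := 1)) //;
    last by move=> rk; apply/negP => /dvdnP [x]; lia.
  rewrite (cXq_at (r := 2) (i := i)) //; last lia.
  rewrite (cXq_miss (k := i.+1.*2) (r := 3)) //;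
    last by move=> rk; apply/negP => /dvdnP [x]; lia.
  have -> : (i.+1.*2 < 2)%N = false by lia.
  have -> : (i.+1.*2 - 2 = i.*2)%N by lia.
  have -> : (i.+1.*2 == 1)%N = false by lia.
  rewrite !cF; try lia.
  rewrite !fF_even.
  move: (fF i) (fF i.+1) => a b.
  by f2case a; f2case b; apply/val_inj.
- case: j kN => [|i] kN.
  + rewrite (cXq_at (r := 1) (i := 0)) //.
    rewrite (cXq_miss (k := 1) (r := 0)) //.
    rewrite (cXq_miss (k := 1) (r := 2)) // (cXq_miss (k := 1) (r := 3)) // !cF //.
    by rewrite (fF_odd 0) fF0; apply/val_inj.
  rewrite (cXq_at (r := 1) (i := i.+1)) //; last lia.
  rewrite (cXq_miss (k := i.+1.*2.+1) (r := 0)) //;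
    last by move=> rk; apply/negP => /dvdnP [x]; lia.
  rewrite (cXq_at (r := 3) (i := i)) //; last lia.
  rewrite (cXq_miss (k := i.+1.*2.+1) (r := 2)) //;
    last by move=> rk; apply/negP => /dvdnP [x]; lia.
  have -> : (i.+1.*2.+1 < 2)%N = false by lia.
  have -> : (i.+1.*2.+1 - 2 = i.*2.+1)%N by lia.
  have -> : (i.+1.*2.+1 == 1)%N = false by lia.
  rewrite !cF; try lia.
  rewrite !fF_odd.
  move: (fF i) (fF i.+1) => a b.
  by f2case a; f2case b; apply/val_inj.
Qed.

Lemma cXq_at' m r i (a : P2) : (0 < m)%N -> ('X^r * (a \Po 'X^m))`_(m * i + r) = a`_i.
Proof. by move=> m0; apply: cXq_at. Qed.
Local Open Scope nat_scope.

Fixpoint mdb_aux (f a : nat) : bool :=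
  match f with
  | 0 => a == 0
  | f'.+1 => (a == 0) || ((a %% 4 < 2) && mdb_aux f' (a %/ 4))
  end.
Definition mdb (a : nat) : bool := mdb_aux a a.

Lemma mdb_aux_fuel f g a : (a <= f)%N -> (a <= g)%N -> mdb_aux f a = mdb_aux g a.
Proof.
elim: f g a => [|f IH] [|g] a /= af ag.
- by [].
- by have -> : a = 0%N by lia.
- by have -> : a = 0%N by lia.
- case: (a =P 0)%N => //= a0.
  have : (a %/ 4 < a)%N by apply: ltn_Pdiv; lia.
  by move=> H; rewrite (IH g) //; lia.
Qed.

Lemma mdb0 : mdb 0. Proof. by []. Qed.
Lemma mdb_rec a : (0 < a)%N -> mdb a = (a %% 4 < 2)%N && mdb (a %/ 4).
Proof.
case: a => [//|a] _; rewrite /mdb /=; congr (_ && _); apply: mdb_aux_fuel => //.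
have : (a.+1 %/ 4 < a.+1)%N by apply: ltn_Pdiv.
lia.
Qed.

Definition good (i : nat) : bool := ((i %% 8 == 0) || (i %% 8 == 2))%N && mdb (i %/ 8).

Lemma dec4 k : exists t s, (s < 4)%N /\ k = (4 * t + s)%N.
Proof. by exists (k %/ 4), (k %% 4); split; [apply: ltn_pmod|]; lia. Qed.

Lemma good_rec i : (0 < i)%N ->
  good i = ((i %% 4 == 0) || (i %% 4 == 2))%N && good (i %/ 4).
Proof.
move=> i0; rewrite /good.
have [u [r [r8 Hi]]] : exists u r, (r < 8)%N /\ i = (8 * u + r)%N.
  by exists (i %/ 8), (i %% 8); split; [apply: ltn_pmod|]; lia.
have E8 : (i %% 8 = r)%N by rewrite Hi; lia.
have D8 : (i %/ 8 = u)%N by rewrite Hi; lia.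
have E4 : (i %% 4 = r %% 4)%N by rewrite Hi; lia.
have D4 : (i %/ 4 = 2 * u + r %/ 4)%N by rewrite Hi; lia.
have [v [w [w4 Hu]]] := dec4 u.
have F8 : ((2 * u + r %/ 4) %% 8 = 2 * w + r %/ 4)%N by rewrite Hu; lia.
have G8 : ((2 * u + r %/ 4) %/ 8 = v)%N by rewrite Hu; lia.
rewrite E8 D8 E4 D4 F8 G8.
have Mu : mdb u = ((w < 2)%N && mdb v) || (u == 0)%N.
  case: (posnP u) => [->|u0]; first by rewrite orbT.
  rewrite mdb_rec // orbF; congr (_ && _); last by congr mdb; lia.
  congr (_ < _)%N; lia.
rewrite Mu.
case: (u =P 0)%N => [u0|/eqP u0]; rewrite ?orbT ?orbF.
  have -> : w = 0%N by lia.
  have -> : v = 0%N by lia.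
  rewrite mdb0 andbT.
  by case: r r8 {E8 E4 D4 F8 G8 Hi} i0 => [|[|[|[|[|[|[|[|r]]]]]]]] //= _ _; exfalso; lia.
by case: r r8 {E8 E4 D4 F8 G8 Hi i0} => [|[|[|[|[|[|[|[|r]]]]]]]] //= _;
  case: w w4 {Hu Mu} => [|[|[|[|w]]]] //= _.
Qed.

Lemma good0 : good 0. Proof. by []. Qed.
Local Open Scope ring_scope.

Definition Tp K : P2 := \poly_(i < K) (good i)%:R.
Lemma coefT K i : (i < K)%N -> (Tp K)`_i = (good i)%:R.
Proof. by move=> iK; rewrite coef_poly iK. Qed.

Lemma good_s0 t : good (4 * t) = good t.
Proof.
case: (posnP t) => [->|t0] //; rewrite good_rec; last lia.
have -> : (4 * t %% 4 = 0)%N by lia.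
by have -> : (4 * t %/ 4 = t)%N by lia.
Qed.
Lemma good_s2 t : good (4 * t + 2) = good t.
Proof.
rewrite good_rec; last lia.
have -> : ((4 * t + 2) %% 4 = 2)%N by lia.
by have -> : ((4 * t + 2) %/ 4 = t)%N by lia.
Qed.
Lemma good_s13 t s : (s == 1)%N || (s == 3)%N -> good (4 * t + s) = false.
Proof.
move=> Hs; rewrite good_rec; last by case/orP: Hs => /eqP ->; lia.
by case/orP: Hs => /eqP ->; [have -> : ((4 * t + 1) %% 4 = 1)%N by lia|
  have -> : ((4 * t + 3) %% 4 = 3)%N by lia].
Qed.

Ltac nodvd := move=> ?; apply/negP => /dvdnP [?]; lia.

Lemma T_fun K : eqm K (Tp K) ((1 + 'X^2) * (Tp K \Po 'X^4)).
Proof.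
move=> k kK; rewrite mulrDl mul1r -{1}(mul1r (Tp K \Po 'X^4)) -(expr0 'X) coefD coefT //.
have [t [s [s4 Hk]]] := dec4 k; subst k.
case: s s4 kK => [|[|[|[|s]]]] // _ kK.
- rewrite (cXq_at' (m := 4) 0 t) //.
  rewrite (cXq_miss (r := 2)) //; last nodvd.
  by rewrite coefT ?addr0 ?addn0 ?good_s0 //; lia.
- rewrite (cXq_miss (r := 0)) //; last nodvd.
  rewrite (cXq_miss (r := 2)) //; last nodvd.
  by rewrite good_s13 // addr0.
- rewrite (cXq_miss (r := 0)) //; last nodvd.
  rewrite (cXq_at' (m := 4) 2 t) //.
  by rewrite coefT ?add0r ?good_s2 //; lia.
- rewrite (cXq_miss (r := 0)) //; last nodvd.
  rewrite (cXq_miss (r := 2)) //; last nodvd.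
  by rewrite good_s13 // addr0.
Qed.

Lemma T_cube K : eqm K ((1 + 'X) ^+ 2 * (Tp K) ^+ 3) 1.
Proof.
have H0 : (Tp K)`_0 = 1 \/ K = 0%N.
  by case: K => [|K]; [right|left; rewrite coefT].
case: H0 => [T0|->]; last by move=> k.
suff : eqm K (1 - (1 + 'X) ^+ 2 * (Tp K) ^+ 3) 0.
  move=> H k kK; have := H k kK; rewrite coefB coef0 => /eqP.
  by rewrite subr_eq0 => /eqP <-.
apply: (eqm_cancel (U := Tp K)) => //.
have E : (1 - (1 + 'X) ^+ 2 * Tp K ^+ 3) * Tp K =
   Tp K - ((1 + 'X^2) * (Tp K ^+ 4) + 2%:R * ('X * Tp K ^+ 4)) by ring.
rewrite E P2_two mul0r addr0 P2_sq4 => k kK.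
by rewrite coefB (T_fun kK) subrr coef0.
Qed.

Definition Wp K : P2 := (1 + 'X) ^+ 3 * (Tp K \Po 'X^4).

Lemma W_coef K p : (p < K)%N -> (Wp K)`_p = (good (p %/ 4))%:R.
Proof.
move=> pK; set q := Tp K \Po 'X^4.
have E : Wp K = 'X^0 * q + 'X^1 * q + 'X^2 * q + 'X^3 * q + 2%:R * (('X + 'X^2) * q).
  by rewrite /Wp -/q; ring.
rewrite E P2_two mul0r addr0 !coefD.
have [t [s [s4 Hp]]] := dec4 p.
have -> : (p %/ 4 = t)%N by lia.
have tK : (t < K)%N by lia.
subst p.
case: s s4 pK tK => [|[|[|[|s]]]] // _ pK tK.
- rewrite (cXq_at' (m := 4) 0 t) //.
  rewrite (cXq_miss (r := 1)) //; last nodvd.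
  rewrite (cXq_miss (r := 2)) //; last nodvd.
  rewrite (cXq_miss (r := 3)) //; last nodvd.
  by rewrite coefT // !addr0.
- rewrite (cXq_at' (m := 4) 1 t) //.
  rewrite (cXq_miss (r := 0)) //; last nodvd.
  rewrite (cXq_miss (r := 2)) //; last nodvd.
  rewrite (cXq_miss (r := 3)) //; last nodvd.
  by rewrite coefT // !addr0 add0r.
- rewrite (cXq_at' (m := 4) 2 t) //.
  rewrite (cXq_miss (r := 0)) //; last nodvd.
  rewrite (cXq_miss (r := 1)) //; last nodvd.
  rewrite (cXq_miss (r := 3)) //; last nodvd.
  by rewrite coefT // !addr0 !add0r.
- rewrite (cXq_at' (m := 4) 3 t) //.
  rewrite (cXq_miss (r := 0)) //; last nodvd.
  rewrite (cXq_miss (r := 1)) //; last nodvd.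
  rewrite (cXq_miss (r := 2)) //; last nodvd.
  by rewrite coefT // !add0r.
Qed.

Lemma W_cube K : eqm K ((Wp K) ^+ 3) (1 + 'X).
Proof.
have E : (Wp K) ^+ 3 = (1 + 'X) * ((1 + 'X) ^+ 2 * (Tp K) ^+ 3) ^+ 4.
  by rewrite /Wp -P2_sq4; ring.
rewrite E; apply: eqm_trans (_ : eqm K _ ((1 + 'X) * 1 ^+ 4)) _.
  by apply: eqm_mul; [apply: eqm_refl|apply: eqm_exp; apply: T_cube].
by rewrite expr1n mulr1; apply: eqm_refl.
Qed.

Definition c0 (m : nat) : bool := good ((m + 1) %/ 4).
Definition EE (Y : P2) : P2 := Y + (1 + Y) ^+ 2 * 'X + (1 + Y) ^+ 3 * 'X^2.

Lemma coefG (c : nat -> bool) M k : (0 < k)%N -> (k <= M)%N -> (Gtrunc c M)`_k = (c k)%:R.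
Proof. by move=> k0 kM; rewrite coef_poly ltnS kM; case: k k0 {kM}. Qed.
Lemma coefG0 (c : nat -> bool) M : (Gtrunc c M)`_0 = 0.
Proof. by rewrite coef_poly. Qed.

Lemma XY0 M : eqm M.+1 ('X * (1 + Gtrunc c0 M)) (1 + Wp M.+1).
Proof.
move=> k kM; rewrite coefXM coefD coef1 (coefD 1) coef1 W_coef //.
case: k kM => [|m] kM /=.
  by rewrite /good /=; apply/val_inj.
case: m kM => [|m] kM /=.
  by rewrite coefG0 /good /=; apply/val_inj.
by rewrite coefG //; last lia; rewrite !add0r /c0 addn1.
Qed.

Lemma EY0 n : eqm n (EE (Gtrunc c0 (n + 2))) 0.
Proof.
apply: (eqm_Xn (m := 3)).
set Y := Gtrunc c0 (n + 2); set W := Wp (n + 2).+1.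
have E1 : 'X^3 * EE Y = 'X^2 * ('X * (1 + Y) + ('X * (1 + Y)) ^+ 2 + ('X * (1 + Y)) ^+ 3 - 'X).
  by rewrite /EE; ring.
have H := XY0 (M := n + 2).
have E2 : eqm (n + 3) ('X^2 * ('X * (1 + Y) + ('X * (1 + Y)) ^+ 2 + ('X * (1 + Y)) ^+ 3 - 'X))
   ('X^2 * ((1 + W) + (1 + W) ^+ 2 + (1 + W) ^+ 3 - 'X)).
  apply: eqm_mul; first exact: eqm_refl.
  have H' : eqm (n + 3) ('X * (1 + Y)) (1 + W) by move=> k kk; apply: H; lia.
  apply: eqm_add; last exact: eqm_refl.
  by apply: eqm_add; [apply: eqm_add|]; rewrite // ; apply: eqm_exp.
have E3 : 'X^2 * ((1 + W) + (1 + W) ^+ 2 + (1 + W) ^+ 3 - 'X) =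
   'X^2 * (1 + W ^+ 3 - 'X) + 2%:R * ('X^2 * (1 + 3%:R * W + 2%:R * W ^+ 2)).
  by ring.
rewrite E1; apply: eqm_trans E2 _; rewrite E3 P2_two mul0r addr0.
have H3 : eqm (n + 3) (W ^+ 3) (1 + 'X) by move=> k kk; apply: W_cube; lia.
apply: eqm_trans (_ : eqm _ _ ('X^2 * (1 + (1 + 'X) - 'X))) _.
  apply: eqm_mul; first exact: eqm_refl.
  by apply: eqm_add; [apply: eqm_add|]; rewrite //; apply: eqm_refl.
have -> : 'X^2 * (1 + (1 + 'X) - 'X) = 'X^2 * 2%:R :> P2 by ring.
by rewrite P2_two mulr0; apply: eqm_refl.
Qed.

Lemma comp_polyXn' (p q : P2) n : (p ^+ n) \Po q = (p \Po q) ^+ n.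
Proof.
elim: n => [|n IH]; first by rewrite !expr0 comp_polyC.
by rewrite !exprS comp_polyM IH.
Qed.

Lemma EG c N : is_comp_inverse c -> eqm N.+1 (EE (Gtrunc c N)) 0.
Proof.
move=> Hc; set G := Gtrunc c N; set F := Ftrunc N.
have HFG : eqm N.+1 (F \Po G) 'X.
  by move=> k kN; rewrite coefX; apply: (proj1 (Hc N k _)); lia.
have H1 := eqm_comp_l (F_eq (N := N)) (coefG0 c N).
rewrite comp_poly0 -/F -/G in H1.
have E : ('X + (1 + 'X) ^+ 2 * F + (1 + 'X) ^+ 3 * F ^+ 2) \Po G =
   G + (1 + G) ^+ 2 * (F \Po G) + (1 + G) ^+ 3 * (F \Po G) ^+ 2.
  by rewrite !(comp_polyD, comp_polyM, comp_polyX, comp_polyC); ring.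
rewrite E in H1; apply: eqm_trans H1; apply: eqm_sym.
rewrite /EE; apply: eqm_add; first apply: eqm_add.
- exact: eqm_refl.
- by apply: eqm_mul; [apply: eqm_refl|].
- by apply: eqm_mul; [apply: eqm_refl|rewrite expr2; apply: eqm_mul].
Qed.

Lemma EE_uniq n (Y Z : P2) : eqm n (EE Y) 0 -> eqm n (EE Z) 0 -> eqm n (Y - Z) 0.
Proof.
move=> HY HZ.
set U := 1 + 'X * ((1 + Y) + (1 + Z)) + 'X^2 * ((1 + Y) ^+ 2 + (1 + Y) * (1 + Z) + (1 + Z) ^+ 2).
apply: (eqm_cancel (U := U)).
  have -> : (Y - Z) * U = EE Y - EE Z by rewrite /U /EE; ring.
  by move=> k kn; rewrite coefB HY // HZ // !coef0 subrr.
by rewrite /U !coefD coef1 coefXM coefXnM /= addr0 addr0.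
Qed.

Lemma c_eq c k : is_comp_inverse c -> (0 < k)%N -> c k = c0 k.
Proof.
move=> Hc k0.
have H := EE_uniq (EG (N := k) Hc) (EY0 (n := k.+1)).
have := H k (ltnSn k); rewrite coefB coef0 coefG // coefG //; last lia.
move/eqP; rewrite subr_eq0 => /eqP.
by case: (c k); case: (c0 k) => // /(congr1 val).
Qed.
Local Open Scope nat_scope.

Fixpoint cntP (P : nat -> bool) (m : nat) : nat :=
  if m is m'.+1 then cntP P m' + P m' else 0.

Lemma cntP_const P a b : a <= b -> (forall x, a <= x < b -> ~~ P x) -> cntP P b = cntP P a.
Proof.
move=> ab H; elim: b ab H => [|b IH] ab H; first by have -> : a = 0 by lia.
case: (ltngtP a b.+1) => [lt|gt|eq]; last by rewrite eq.
- rewrite /= IH; last by move=> x xab; apply: H; lia.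
  + by rewrite (negbTE (H b _)) ?addn0 //; lia.
  + lia.
- lia.
Qed.

Lemma cntP_le P m : cntP P m <= m.
Proof. elim: m => //= m IH; case: (P m) => /=; lia. Qed.

Fixpoint spread_aux (f b : nat) : nat :=
  if f is f'.+1 then odd b + 4 * spread_aux f' b./2 else 0.
Definition spread b := spread_aux b b.

Lemma half_lt b : 0 < b -> b./2 < b.
Proof. by move=> b0; rewrite ltn_half_double -addnn; lia. Qed.

Lemma spread_aux0 f : spread_aux f 0 = 0.
Proof. by elim: f => //= f ->. Qed.

Lemma spread_aux_fuel f g b : b <= f -> b <= g -> spread_aux f b = spread_aux g b.
Proof.
elim: f g b => [|f IH] [|g] b /= bf bg.
- by [].
- have -> : b = 0 by lia.
  by have := spread_aux0 g.+1.
- have -> : b = 0 by lia.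
  by have := spread_aux0 f.+1.
- case: (posnP b) => [->|b0]; first by rewrite !spread_aux0.
  by have := half_lt b0; move=> H; rewrite (IH g) //; lia.
Qed.

Lemma spread_rec b : spread b = odd b + 4 * spread b./2.
Proof.
case: b => [|b] //.
rewrite /spread /=; congr (_ + 4 * _); apply: spread_aux_fuel => //.
by have := half_lt (ltn0Sn b); lia.
Qed.

Lemma spread0 : spread 0 = 0. Proof. by []. Qed.

Lemma spread_2 c (e : bool) : spread (e + c.*2) = e + 4 * spread c.
Proof.
rewrite spread_rec half_bit_double; congr (_ + _).
by case: e; rewrite /= ?add0n ?odd_double.
Qed.

Lemma spread_ge b : b <= spread b.
Proof.
elim/ltn_ind: b => b IH.
case: (posnP b) => [->|b0] //.
rewrite spread_rec; have := IH _ (half_lt b0); have := odd_double_half b.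
lia.
Qed.

Lemma spread_S b : spread b < spread b.+1.
Proof.
elim/ltn_ind: b => b IH.
have := odd_double_half b; move: (b./2) => c Hd.
case Hb: (odd b) Hd => /= Hd.
- have E1 : spread b = 1 + 4 * spread c.
    have -> : b = true + c.*2 by lia.
    by rewrite spread_2.
  have E2 : spread b.+1 = 0 + 4 * spread c.+1.
    have -> : b.+1 = false + c.+1.*2 by lia.
    by rewrite spread_2.
  rewrite E1 E2.
  have := IH c ltac:(lia); lia.
- have E1 : spread b = 0 + 4 * spread c.
    have -> : b = false + c.*2 by lia.
    by rewrite spread_2.
  have E2 : spread b.+1 = 1 + 4 * spread c.
    have -> : b.+1 = true + c.*2 by lia.
    by rewrite spread_2.
  rewrite E1 E2; lia.
Qed.

Lemma spread_mono b b' : b < b' -> spread b < spread b'.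
Proof.
elim: b' => // b' IH; rewrite ltnS leq_eqVlt => /orP [/eqP ->|H].
  exact: spread_S.
by apply: ltn_trans (IH H) (spread_S _).
Qed.

Lemma spread_lt b b' : (spread b < spread b') = (b < b').
Proof.
apply/idP/idP; last exact: spread_mono.
move=> H; case: (ltngtP b b') => // [H2|E].
  by have := spread_mono H2; lia.
by rewrite E in H; lia.
Qed.

Lemma mdb_spread b : mdb (spread b).
Proof.
elim/ltn_ind: b => b IH.
case: (posnP (spread b)) => [->//|s0].
rewrite mdb_rec // spread_rec.
case: (posnP b) => [b0|b0]; first by rewrite b0 in s0.
have -> : (odd b + 4 * spread b./2) %% 4 = odd b by case: (odd b); lia.
have -> : (odd b + 4 * spread b./2) %/ 4 = spread b./2 by case: (odd b); lia.
by rewrite IH ?half_lt // andbT; case: (odd b).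
Qed.

Lemma mdb_spread_ex a : mdb a -> exists b, spread b = a.
Proof.
elim/ltn_ind: a => a IH Ha.
case: (posnP a) => [->|a0]; first by exists 0.
move: Ha; rewrite mdb_rec // => /andP [a4 Ha].
have [b' Hb'] := IH (a %/ 4) ltac:(apply: ltn_Pdiv => //) Ha.
exists ((a %% 4 == 1) + b'.*2).
rewrite (spread_2 b' (a %% 4 == 1)) Hb'.
have : a %% 4 = 0 \/ a %% 4 = 1 by lia.
by case=> H; rewrite H /=; lia.
Qed.

Lemma spread_pow b k : b < 2 ^ k -> spread (b + 2 ^ k) = spread b + 4 ^ k.
Proof.
elim: k b => [|k IH] b Hb.
  by have -> : b = 0 by rewrite expn0 in Hb; lia.
have E : b = odd b + (b./2).*2 by rewrite odd_double_half.
have Hh : b./2 < 2 ^ k by rewrite ltn_half_double -muln2 -expnSr.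
rewrite {1}E.
have -> : odd b + (b./2).*2 + 2 ^ k.+1 = odd b + (b./2 + 2 ^ k).*2.
  by rewrite expnS doubleD -muln2; lia.
rewrite (spread_2 (b./2 + 2 ^ k) (odd b)) IH // (spread_rec b) expnS; lia.
Qed.

Lemma Mc_spread b : cntP mdb (spread b) = b.
Proof.
elim: b => [//|b IH].
rewrite (@cntP_const _ (spread b).+1).
- by rewrite /= IH mdb_spread addn1.
- exact: spread_S.
- move=> x /andP [x1 x2]; apply/negP => /mdb_spread_ex [b' Hb'].
  move: x1 x2; rewrite -Hb' => H1 H2.
  have : spread b < spread b' by lia.
  rewrite spread_lt => H3.
  move: H2; rewrite spread_lt; lia.
Qed.

Fixpoint gs (j : nat) : nat := if j is j'.+1 then gs j' + good j else 0.

Lemma gs_le j : gs j <= j.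
Proof. elim: j => //= j IH; case: (good j.+1) => /=; lia. Qed.

Lemma gs_addS x k : gs (x + k.+1) = gs (x + k) + good (x + k.+1).
Proof. by rewrite addnS. Qed.

Lemma good8 t r : r < 8 -> good (8 * t + r) = ((r == 0) || (r == 2)) && mdb t.
Proof.
move=> r8; rewrite /good.
have -> : (8 * t + r) %% 8 = r by lia.
by have -> : (8 * t + r) %/ 8 = t by lia.
Qed.

Lemma gs8 t : gs (8 * t) + 1 = 2 * cntP mdb t + mdb t.
Proof.
elim: t => [//|t IH].
have -> : 8 * t.+1 = 8 * t + 8 by lia.
have G8 : good (8 * t + 8) = mdb t.+1.
  by rewrite (_ : 8 * t + 8 = 8 * t.+1 + 0) ?good8 //; lia.
rewrite !gs_addS addn0 G8 !good8 //=.
move: IH; case: (mdb t); case: (mdb t.+1) => /=; lia.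
Qed.

Lemma gs8r t r : r < 8 -> gs (8 * t + r) + 1 = 2 * cntP mdb t + mdb t + (2 <= r) * mdb t.
Proof.
move=> r8; have H := gs8 t.
case: r r8 => [|[|[|[|[|[|[|[|r]]]]]]]] // _;
  rewrite ?gs_addS addn0 ?good8 //= ?addn0; move: H; case: (mdb t) => /=; lia.
Qed.

Lemma gs_parity t r : r < 8 -> odd (gs (8 * t + r)) = ~~ (mdb t && (r < 2)).
Proof.
move=> r8; have H := gs8r t r8.
suff E : (odd (gs (8 * t + r)) : nat) = (~~ (mdb t && (r < 2)) : nat).
  by move: E; case: (odd _); case: (~~ _).
rewrite -modn2.
move: H; case: (mdb t); case: (ltnP r 2) => /= Hr; rewrite ?muln1 ?muln0 => H.
all: lia.
Qed.

Lemma gs_spread b : gs (8 * spread b) = 2 * b.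
Proof.
have := gs8r (spread b) (ltn0Sn 7); rewrite addn0 Mc_spread mdb_spread /=; lia.
Qed.

Lemma gs_gap j j' : j < j' -> ~~ good j.+1 -> gs j' + j + 1 <= gs j + j'.
Proof.
move=> jj' gj; elim: j' jj' => [//|j' IH].
rewrite ltnS leq_eqVlt => /orP [/eqP <-|H].
  by rewrite /= (negbTE gj) addn0; lia.
have := IH H; rewrite /=; case: (good j'.+1) => /=; lia.
Qed.

Lemma gs_inj j j' : ~~ good j.+1 -> ~~ good j'.+1 -> j - gs j = j' - gs j' -> j = j'.
Proof.
move=> gj gj' E; have l1 := gs_le j; have l2 := gs_le j'.
case: (ltngtP j j') => // H.
- by have := gs_gap H gj; lia.
- by have := gs_gap H gj'; lia.
Qed.

Definition psi b := 8 * spread b - 2 * b.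
Definition vv x := 2 ^ x.-1 * (2 ^ x - 1).

Lemma psi_step b k : b < 2 ^ k -> psi (b + 2 ^ k) = psi b + vv k.+2.
Proof.
move=> bk; rewrite /psi /vv spread_pow //.
have sg := spread_ge b.
have E4 : 4 ^ k = 2 ^ k * 2 ^ k by rewrite -expnMn.
have E1 : 2 ^ k.+2.-1 = 2 * 2 ^ k by rewrite /= expnS.
have E2 : 2 ^ k.+2 = 4 * 2 ^ k by rewrite !expnS; lia.
have p0 : 0 < 2 ^ k by rewrite expn_gt0.
rewrite E4 E1 E2; move: p0 sg bk; move: (2 ^ k) => p; nia.
Qed.

Lemma path_rcons_lt y s x :
  path ltn y (rcons s x) = path ltn y s && all (fun z => z < x) (y :: s).
Proof.
elim: s y => [|z s IH] y /=; first by rewrite !andbT.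
rewrite IH /=.
case: (boolP (y < z)) => yz //=; case: (boolP (z < x)) => zx /=; rewrite ?andbF //.
by rewrite (ltn_trans yz zx).
Qed.

Lemma sorted_rcons_lt s x :
  sorted ltn (rcons s x) = sorted ltn s && all (fun z => z < x) s.
Proof. by case: s => [|y s] //=; rewrite path_rcons_lt. Qed.

Lemma sum_rcons s x : \sum_(y <- rcons s x) vv y = \sum_(y <- s) vv y + vv x.
Proof. by rewrite -cats1 big_cat big_seq1. Qed.

Lemma rep_of_b k b : b < 2 ^ k -> exists s, [/\ sorted ltn s, all (fun x => 1 < x) s,
  all (fun x => x < k.+2) s & psi b = \sum_(x <- s) vv x].
Proof.
elim: k b => [|k IH] b bk.
  have -> : b = 0 by rewrite expn0 in bk; lia.
  by exists [::]; split => //; rewrite big_nil.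
case: (ltnP b (2 ^ k)) => H.
  have [s [s1 s2 s3 s4]] := IH b H; exists s; split => //.
  by apply: sub_all s3 => x /=; lia.
have Hb : b - 2 ^ k < 2 ^ k by rewrite expnS in bk; lia.
have [s [s1 s2 s3 s4]] := IH _ Hb.
exists (rcons s k.+2); split.
- by rewrite sorted_rcons_lt s1.
- by rewrite all_rcons s2 andbT.
- by rewrite all_rcons ltnSn; apply: sub_all s3 => x /=; lia.
- by rewrite sum_rcons -s4 -psi_step // subnK.
Qed.

Lemma b_of_rep s : sorted ltn s -> all (fun x => 1 < x) s ->
  exists b, psi b = \sum_(x <- s) vv x /\ (forall k, all (fun x => x < k.+2) s -> b < 2 ^ k).
Proof.
elim/last_ind: s => [|s x IH].
  by move=> _ _; exists 0; split; [rewrite big_nil|move=> k _; rewrite expn_gt0].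
rewrite sorted_rcons_lt all_rcons => /andP [ss sx] /andP [x1 ax].
have [b [Hb Hk]] := IH ss ax.
have bx : b < 2 ^ (x - 2) by apply: Hk; apply: sub_all sx => y /=; lia.
exists (b + 2 ^ (x - 2)); split.
  by rewrite psi_step // sum_rcons Hb; congr (_ + vv _); lia.
move=> k; rewrite all_rcons => /andP [xk _].
have : 2 ^ (x - 2) + 2 ^ (x - 2) <= 2 ^ k.
  by rewrite addnn -mul2n -expnS leq_exp2l //; lia.
lia.
Qed.

Lemma rep_iff n : representable n <-> exists b, n = psi b.
Proof.
split.
- case=> s [s1 [s2 s3]].
  have [b [Hb _]] := b_of_rep s1 s2.
  by exists b; rewrite Hb s3.
- case=> b ->.
  have [s [s1 s2 _ s4]] := rep_of_b (ltn_expl b (ltnSn 1)).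
  by exists s; split; [|split].
Qed.

Definition Dp (m : nat) : bool := (0 < m) && ~~ good ((m + 1) %/ 4).

Lemma cntP_addS P x k : cntP P (x + k.+1) = cntP P (x + k) + P (x + k).
Proof. by rewrite addnS. Qed.

Lemma Dv j i : i < 4 -> Dp (4 * j + 3 + i) = ~~ good j.+1.
Proof.
move=> i4; rewrite /Dp.
have -> : 0 < 4 * j + 3 + i by lia.
by have -> : (4 * j + 3 + i + 1) %/ 4 = j.+1 by lia.
Qed.

Lemma blockcnt j : cntP Dp (4 * j + 3) = 4 * (j - gs j).
Proof.
elim: j => [//|j IH].
have -> : 4 * j.+1 + 3 = 4 * j + 3 + 4 by lia.
rewrite !cntP_addS (Dv j (_ : 0 < 4)) // (Dv j (_ : 1 < 4)) // (Dv j (_ : 2 < 4)) //.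
rewrite (Dv j (_ : 3 < 4)) // addn0 IH /=.
have := gs_le j; case: (good j.+1) => /=; lia.
Qed.

Lemma Dp_block m : Dp m -> exists j r, [/\ r < 4, m = 4 * j + 3 + r, ~~ good j.+1 &
   cntP Dp m = 4 * (j - gs j) + r].
Proof.
move=> Dm.
have m3 : 3 <= m.
  move: Dm; rewrite /Dp; case: m => [|[|[|m]]] //.
have [j [r [r4 Hr]]] := dec4 (m - 3).
have Em : m = 4 * j + 3 + r by lia.
have gj : ~~ good j.+1 by rewrite -(Dv j r4) -Em.
exists j, r; split => //.
rewrite Em; case: r r4 {Hr Em} => [|[|[|[|r]]]] // _.
- by rewrite !addn0 blockcnt.
- by rewrite cntP_addS (Dv j (_ : 0 < 4)) // addn0 blockcnt gj /=; lia.
- rewrite (@cntP_addS Dp (4 * j + 3) 1) (@cntP_addS Dp (4 * j + 3) 0).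
  by rewrite (Dv j (_ : 0 < 4)) // (Dv j (_ : 1 < 4)) // addn0 blockcnt gj /=; lia.
- rewrite (@cntP_addS Dp (4 * j + 3) 2) (@cntP_addS Dp (4 * j + 3) 1).
  rewrite (@cntP_addS Dp (4 * j + 3) 0).
  by rewrite (Dv j (_ : 0 < 4)) // (Dv j (_ : 1 < 4)) // (Dv j (_ : 2 < 4)) // addn0 blockcnt gj /=; lia.
Qed.

Lemma key j : ~~ good j.+1 -> (~~ odd (gs j) <-> representable (j - gs j)).
Proof.
move=> gj.
have [t [r [r8 Hj]]] : exists t r, r < 8 /\ j = 8 * t + r.
  by exists (j %/ 8), (j %% 8); split; [apply: ltn_pmod|]; lia.
rewrite rep_iff Hj gs_parity // negbK.
split.
- case/andP => mt r2.
  have r0 : r = 0.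
    case: r r8 r2 Hj => [|[|r]] // _ _ Hj.
    by move: gj; rewrite Hj (_ : (8 * t + 1).+1 = 8 * t + 2) ?good8 ?mt //; lia.
  have [b Hb] := mdb_spread_ex mt.
  by exists b; rewrite r0 addn0 -Hb gs_spread /psi.
- case=> b Hb.
  have gj' : ~~ good (8 * spread b).+1.
    by rewrite (_ : (8 * spread b).+1 = 8 * spread b + 1) ?good8 //; lia.
  have E : 8 * t + r = 8 * spread b.
    apply: gs_inj; [by rewrite -Hj|exact: gj'|].
    by rewrite gs_spread Hb.
  have -> : t = spread b by lia.
  have -> : r = 0 by lia.
  by rewrite mdb_spread.
Qed.

Theorem mainTheorem11 (c : nat -> bool) (d : nat -> nat) :
  is_comp_inverse c ->
  (forall i : nat, (d i < d i.+1)%N) ->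
  (forall m : nat, ((0 < m)%N /\ c m = false) <-> exists k : nat, d k = m) ->
  forall n : nat, zseq d n = 1%Z <-> representable n.
Proof.
move=> Hc Hd HD n.
have HDp : forall m, Dp m <-> exists k, d k = m.
  move=> m; rewrite -HD /Dp; split.
  - case/andP => m0 gm; split => //; rewrite c_eq // /c0.
    by move: gm; case: (good _).
  - case=> m0 cm; rewrite m0 /=; move: cm; rewrite c_eq // /c0.
    by case: (good _).
have dmono : forall i j, i < j -> d i < d j.
  move=> i j; elim: j => // j IH; rewrite ltnS leq_eqVlt => /orP [/eqP ->|H].
    exact: Hd.
  exact: ltn_trans (IH H) (Hd j).
have dlt : forall i j, d i < d j -> i < j.
  move=> i j H; rewrite ltnNge; apply/negP => ji.
  move: ji; rewrite leq_eqVlt => /orP [/eqP E|/dmono]; [rewrite E in H|]; lia.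
have cnt_d : forall k, cntP Dp (d k) = k.
  elim=> [|k IH].
    rewrite (@cntP_const _ 0) // => x /andP [_ x0]; apply/negP.
    by move/HDp => [j Ej]; move: x0; rewrite -Ej => /dlt.
  rewrite (@cntP_const _ (d k).+1).
  - by rewrite /= IH (proj2 (HDp (d k)) (ex_intro _ k erefl)) addn1.
  - exact: Hd.
  - move=> x /andP [x1 x2]; apply/negP; move/HDp => [j Ej].
    move: x1 x2; rewrite -Ej => /dlt H1 /dlt H2; lia.
have Dm : Dp (d (4 * n)) by apply/HDp; exists (4 * n).
have [j [r [r4 Em gj Hc4]]] := Dp_block Dm.
rewrite cnt_d in Hc4.
have r0 : r = 0 by lia.
have Hn : n = j - gs j by lia.
rewrite /zseq Em r0 addn0.
have -> : (4 * j + 3).+1 %/ 4 = j.+1 by lia.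
have gl := gs_le j.
rewrite subzn; last lia.
rewrite modz_nat.
have -> : (j.+1 - n) %% 2 = ~~ odd (gs j).
  rewrite (_ : j.+1 - n = gs j + 1); last lia.
  by rewrite modn2 oddD addbT.
rewrite Hn -key //.
by case: (odd (gs j)).
Qed.
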